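(* Let $\mathfrak{g} = \mathfrak{r}_3$, the three-dimensional Lie algebra with basis $\{e_1,e_2,e_3\}$ and nonzero brackets $[e_1,e_2]=e_2+e_3$, $[e_1,e_3]=e_3$. For every inner product $\langle\cdot,\cdot\rangle$ on $\mathfrak{g}$, there exist $\lambda > 0$, $k > 0$, and an orthonormal basis $\{x_1, x_2, x_3\}$ with respect to $k \langle\cdot,\cdot\rangle$ such that the bracket relations are given by \[ [x_1,x_2] = x_2 + \lambda x_3, \quad [x_1,x_3] = x_3 \] (and $[x_2,x_3]=0$). Furthermore, the matrix expression of the derivation algebra $\mathrm{Der}(\mathfrak{g})$ with respect to $\{x_1, x_2, x_3\}$ coincides with \[ \left\{ \begin{pmatrix} 0 & 0 & 0 \\ x_{21} & x_{22} & 0 \\ x_{31} & x_{32} & x_{22} \end{pmatrix} \;\middle|\; x_{21}, x_{22}, x_{31}, x_{32} \in \mathbb{R} \right\}. \] *)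

(* Defs.v *)
(* The Lie algebra r_3 is modelled as column vectors 'cV[R]_3
   of coordinates with respect to the basis {e1,e2,e3}; R is any realType. *)
From HB Require Import structures.
From mathcomp Require Import all_boot all_order all_algebra.
From mathcomp Require Import reals.
Set Implicit Arguments. Unset Strict Implicit. Unset Printing Implicit Defensive.
Import Order.TTheory GRing.Theory Num.Theory.
Local Open Scope ring_scope.

Section R3.
Variable R : realType.
Local Notation g := 'cV[R]_3.

(* Lie bracket of r_3, extended bilinearly from
   [e1,e2] = e2 + e3, [e1,e3] = e3, [e2,e3] = 0:
   [u,v] = (u1 v2 - u2 v1)(e2 + e3) + (u1 v3 - u3 v1) e3. *)
Definition r3_bracket (u v : g) : g :=
  let a := u 0 0 * v 1 0 - u 1 0 * v 0 0 in
  let b := u 0 0 * v 2 0 - u 2 0 * v 0 0 in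
  \col_(i < 3) (if i == 0 :> nat then 0 else if i == 1 :> nat then a else a + b).

Definition is_inner_product (ip : g -> g -> R) : Prop :=
  (forall (a : R) (u v w : g), ip (a *: u + v) w = a * ip u w + ip v w) /\
  (forall u v : g, ip u v = ip v u) /\
  (forall v : g, v != 0 -> 0 < ip v v).

Definition is_derivation (D : g -> g) : Prop :=
  (forall (a : R) (u v : g), D (a *: u + v) = a *: D u + D v) /\
  (forall u v : g, D (r3_bracket u v) = r3_bracket (D u) v + r3_bracket u (D v)).

Definition matrix_wrt (x : 'I_3 -> g) (D : g -> g) (M : 'M[R]_3) : Prop :=
  forall j : 'I_3, D (x j) = \sum_(i < 3) M i j *: x i.

Definition der_form (x21 x22 x31 x32 : R) : 'M[R]_3 :=
  \matrix_(i < 3, j < 3)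
    nth 0 (nth [::] [:: [:: 0; 0; 0]; [:: x21; x22; 0]; [:: x31; x32; x22]] i) j.

End R3.

(* Main.v *)
Require Import Defs.
From HB Require Import structures.
From mathcomp Require Import all_boot all_order all_algebra.
From mathcomp Require Import reals.
From mathcomp Require Import ring lra.
Import Order.TTheory GRing.Theory Num.Theory.
Local Open Scope ring_scope.
Set Implicit Arguments. Unset Strict Implicit.

Section Gen.
Variable R : realType.
Local Notation g := 'cV[R]_3.
Local Notation B := (@r3_bracket R).

Lemma BlinL (a : R) (u v w : g) : B (a *: u + v) w = a *: B u w + B v w.
Proof. apply/matrixP => i j; rewrite !mxE; case: ifP => _; first by ring.
case: ifP => _; ring. Qed.
Lemma BlinR (a : R) (u v w : g) : B w (a *: u + v) = a *: B w u + B w v.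
Proof. apply/matrixP => i j; rewrite !mxE; case: ifP => _; first by ring.
case: ifP => _; ring. Qed.
Lemma Banti (u v : g) : B u v = - B v u.
Proof. apply/matrixP => i j; rewrite !mxE; case: ifP => _; first by ring.
case: ifP => _; ring. Qed.

Variable ip : g -> g -> R.
Hypothesis Hip : is_inner_product ip.

Lemma ipL (a : R) (u : g) (v : g) (w : g) : ip (a *: u + v) w = a * ip u w + ip v w.
Proof. by case: Hip. Qed.
Lemma ipS (u : g) (v : g) : ip u v = ip v u.
Proof. by case: Hip => _ []. Qed.
Lemma ip0 (w : g) : ip 0 w = 0.
Proof. have := ipL 1 0 0 w; rewrite scaler0 addr0 mul1r => h.
by apply: (addrI (ip 0 w)); rewrite addr0 -h. Qed.
Lemma ipD (u : g) (v : g) (w : g) : ip (u + v) w = ip u w + ip v w.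
Proof. by rewrite -{1}(scale1r u) ipL mul1r. Qed.
Lemma ipZ (a : R) (u : g) (w : g) : ip (a *: u) w = a * ip u w.
Proof. by rewrite -(addr0 (a *: u)) ipL ip0 addr0. Qed.
Lemma ipN (u : g) (w : g) : ip (- u) w = - ip u w.
Proof. by rewrite -scaleN1r ipZ mulN1r. Qed.
Lemma ipB (u : g) (v : g) (w : g) : ip (u - v) w = ip u w - ip v w.
Proof. by rewrite ipD ipN. Qed.
Lemma ipDr (u : g) (v : g) (w : g) : ip w (u + v) = ip w u + ip w v.
Proof. by rewrite ipS ipD ipS (ipS v). Qed.
Lemma ipZr (a : R) (u : g) (w : g) : ip w (a *: u) = a * ip w u.
Proof. by rewrite ipS ipZ ipS. Qed.
Lemma ipNr (u : g) (w : g) : ip w (- u) = - ip w u.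
Proof. by rewrite ipS ipN ipS. Qed.
Lemma ipBr (u : g) (v : g) (w : g) : ip w (u - v) = ip w u - ip w v.
Proof. by rewrite ipDr ipNr. Qed.

Variables (lam k : R) (x : 'I_3 -> g).
Hypothesis Hlam : 0 < lam.
Hypothesis Hon : forall i j : 'I_3, k * ip (x i) (x j) = (i == j)%:R.
Hypothesis B01 : B (x 0) (x 1) = x 1 + lam *: x 2.
Hypothesis B02 : B (x 0) (x 2) = x 2.
Hypothesis B12 : B (x 1) (x 2) = 0.

Definition cf (j : 'I_3) (v : g) := k * ip v (x j).
Hypothesis Hspan : forall v, v = cf 0 v *: x 0 + cf 1 v *: x 1 + cf 2 v *: x 2.

Lemma cfD (j : 'I_3) (u : g) (v : g) : cf j (u + v) = cf j u + cf j v.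
Proof. by rewrite /cf ipD mulrDr. Qed.
Lemma cfZ (j : 'I_3) (a : R) (u : g) : cf j (a *: u) = a * cf j u.
Proof. by rewrite /cf ipZ mulrCA. Qed.
Lemma cfN (j : 'I_3) (u : g) : cf j (- u) = - cf j u.
Proof. by rewrite /cf ipN mulrN. Qed.
Lemma cf0 j : cf j 0 = 0.
Proof. by rewrite /cf ip0 mulr0. Qed.
Lemma cfx i j : cf j (x i) = (i == j)%:R.
Proof. by rewrite /cf Hon. Qed.

Lemma span_of : (forall v : g, exists d0 d1 d2 : R, v = d0 *: x 0 + d1 *: x 1 + d2 *: x 2) ->
  forall v, v = cf 0 v *: x 0 + cf 1 v *: x 1 + cf 2 v *: x 2.
Proof.
move=> H v; have [d0 [d1 [d2 Ev]]] := H v.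
rewrite {1}Ev; congr (_ *: _ + _ *: _ + _ *: _);
rewrite Ev !(cfD, cfZ, cfx) /=; ring.
Qed.

Lemma cf_eq (u v : g) : (forall j, cf j u = cf j v) -> u = v.
Proof. by move=> H; rewrite (Hspan u) (Hspan v) !H. Qed.

Lemma BZl (a : R) (u : g) (w : g) : B (a *: u) w = a *: B u w.
Proof. apply/matrixP => i j; rewrite !mxE; case: ifP => _; first by ring.
case: ifP => _; ring. Qed.
Lemma BDl (u : g) (v : g) (w : g) : B (u + v) w = B u w + B v w.
Proof. by rewrite -{1}(scale1r u) BlinL scale1r. Qed.
Lemma BZr (a : R) (u : g) (w : g) : B w (a *: u) = a *: B w u.
Proof. by rewrite Banti BZl -scalerN -Banti. Qed.
Lemma BDr (u : g) (v : g) (w : g) : B w (u + v) = B w u + B w v.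
Proof. by rewrite Banti BDl opprD -!Banti. Qed.
Lemma Bxx (u : g) : B u u = 0.
Proof. apply/matrixP => i j; rewrite !mxE; case: ifP => _; first by [].
case: ifP => _; ring. Qed.

Lemma cfB (u v : g) :
  [/\ cf 0 (B u v) = 0,
      cf 1 (B u v) = cf 0 u * cf 1 v - cf 1 u * cf 0 v &
      cf 2 (B u v) = lam * (cf 0 u * cf 1 v - cf 1 u * cf 0 v)
                     + (cf 0 u * cf 2 v - cf 2 u * cf 0 v)].
Proof.
have := Hspan u; have := Hspan v.
move: (cf 0 u) (cf 1 u) (cf 2 u) (cf 0 v) (cf 1 v) (cf 2 v) => a0 a1 a2 b0 b1 b2 -> ->.
rewrite !(BDl, BDr, BZl, BZr, Bxx) B01 B02 B12.
rewrite (Banti (x 1) (x 0)) (Banti (x 2) (x 0)) (Banti (x 2) (x 1)) B01 B02 B12.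
rewrite !(cfD, cfZ, cfN, cf0, cfx) /=.
split; ring.
Qed.

Lemma cfB0 (u v : g) : cf 0 (B u v) = 0.
Proof. by case: (cfB u v). Qed.
Lemma cfB1 (u v : g) : cf 1 (B u v) = cf 0 u * cf 1 v - cf 1 u * cf 0 v.
Proof. by case: (cfB u v). Qed.
Lemma cfB2 (u v : g) : cf 2 (B u v) = lam * (cf 0 u * cf 1 v - cf 1 u * cf 0 v)
                     + (cf 0 u * cf 2 v - cf 2 u * cf 0 v).
Proof. by case: (cfB u v). Qed.

Lemma cf_eq3 (u v : g) : cf 0 u = cf 0 v -> cf 1 u = cf 1 v -> cf 2 u = cf 2 v -> u = v.
Proof. by move=> h0 h1 h2; rewrite (Hspan u) (Hspan v) h0 h1 h2. Qed.

Lemma cf_sum (i : 'I_3) (a : 'I_3 -> R) : cf i (\sum_(l < 3) a l *: x l) = a i.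
Proof.
rewrite (big_morph (cf i) (cfD i) (cf0 i)).
rewrite (bigD1 i) //= cfZ cfx eqxx mulr1 big1 ?addr0 // => l /negbTE Hl.
by rewrite cfZ cfx Hl mulr0.
Qed.

Lemma ord3 (i : 'I_3) : i = 0 \/ i = 1 \/ i = 2.
Proof.
case: i => [[|[|[|n]]] Hi]; [left|right;left|right;right|by []]; exact: val_inj.
Qed.

Lemma der_iff (M : 'M[R]_3) :
  (exists D : g -> g, is_derivation D /\ matrix_wrt x D M) <->
  (exists x21 x22 x31 x32 : R, M = der_form x21 x22 x31 x32).
Proof.
split.
- move=> [D [[Dlin Dder] HM]].
  have cfDx i j : cf i (D (x j)) = M i j by rewrite HM cf_sum.
  have D0 : D 0 = 0.
    have := Dlin 1 0 0; rewrite scaler0 addr0 scale1r => h.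
    by apply: (addrI (D 0)); rewrite addr0 -h.
  have E02 := Dder (x 0) (x 2); rewrite B02 in E02.
  have E12 := Dder (x 1) (x 2); rewrite B12 D0 in E12.
  have E01 := Dder (x 0) (x 1); rewrite B01 addrC Dlin in E01.
  have a1 := congr1 (cf 0) E02; have a2 := congr1 (cf 2) E02.
  have b2 := congr1 (cf 2) E12.
  have c1 := congr1 (cf 0) E01; have c2 := congr1 (cf 1) E01; have c3 := congr1 (cf 2) E01.
  move: a1 a2 b2 c1 c2 c3.
  rewrite !(cfD, cfZ, cf0, cfB0, cfB1, cfB2, cfDx, cfx) /=.
  rewrite !(mulr0, mulr1, mul1r, mul0r, subr0, sub0r, addr0, add0r) => h1 h2 h3 h4 h5 h6.
  have lam0 : lam != 0 by rewrite gt_eqF.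
  have m00 : M 0 0 = 0 by lra.
  have m12 : M 1 2 = 0.
    have : lam * M 1 2 = 0 by lra.
    by move/eqP; rewrite mulf_eq0 (negbTE lam0) /= => /eqP.
  have m01 : M 0 1 = 0 by lra.
  have m22 : M 2 2 = M 1 1.
    apply: (mulfI lam0); move: h6; rewrite m00 mulr0 => h6; lra.
  exists (M 1 0), (M 1 1), (M 2 0), (M 2 1).
  apply/matrixP => i j; rewrite !mxE.
  by case: (ord3 i) => [->|[->|->]]; case: (ord3 j) => [->|[->|->]].
- move=> [a [b [c [d ->]]]].
  pose D (v : g) := (a * cf 0 v + b * cf 1 v) *: x 1 + (c * cf 0 v + d * cf 1 v + b * cf 2 v) *: x 2.
  have cfDv (v : g) : [/\ cf 0 (D v) = 0, cf 1 (D v) = a * cf 0 v + b * cf 1 v &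
      cf 2 (D v) = c * cf 0 v + d * cf 1 v + b * cf 2 v].
    by rewrite /D !(cfD, cfZ, cfx) /=; split; ring.
  exists D; split; [split|].
  + move=> s u v; rewrite /D !(cfD, cfZ).
    apply/matrixP => i j; rewrite !mxE; ring.
  + move=> u v; apply: cf_eq3.
    * by case: (cfDv (B u v)) => -> _ _; rewrite cfD (cfB0 (D u)) (cfB0 u) addr0.
    * case: (cfDv (B u v)) => _ -> _; rewrite cfB0 cfB1 cfD (cfB1 (D u)) (cfB1 u (D v)).
      case: (cfDv u) => -> -> _; case: (cfDv v) => -> -> _; ring.
    * case: (cfDv (B u v)) => _ _ ->; rewrite cfB0 cfB1 cfB2 cfD (cfB2 (D u)) (cfB2 u (D v)).
      case: (cfDv u) => -> -> ->; case: (cfDv v) => -> -> ->; ring.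
  + move=> j; case: (cfDv (x j)) => h0 h1 h2.
    apply: cf_eq3; rewrite cf_sum ?h0 ?h1 ?h2 !mxE ?cfx;
    by case: (ord3 j) => [->|[->|->]]; rewrite /=; ring.
Qed.
End Gen.

Section Tri.
Variable R : realType.
Local Notation g := 'cV[R]_3.
Local Notation B := (@r3_bracket R).

Lemma tri_span (p q r : g) : p 0 0 = 1 -> q 0 0 = 0 -> q 1 0 != 0 ->
  r 0 0 = 0 -> r 1 0 = 0 -> r 2 0 != 0 ->
  forall v : g, exists d0 d1 d2 : R, v = d0 *: p + d1 *: q + d2 *: r.
Proof.
move=> p0 q0 q1 r0 r1 r2 v.
exists (v 0 0), ((v 1 0 - v 0 0 * p 1 0) / q 1 0),
  ((v 2 0 - v 0 0 * p 2 0 - (v 1 0 - v 0 0 * p 1 0) / q 1 0 * q 2 0) / r 2 0).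
apply/matrixP => i j; rewrite (ord1 j) !mxE.
case: (ord3 i) => [->|[->|->]]; rewrite ?p0 ?q0 ?r0 ?r1; field; by rewrite ?q1 ?r2.
Qed.

Lemma tri_br (p q r : g) (del gam : R) : p 0 0 = 1 -> q 0 0 = 0 -> q 1 0 = del ->
  r 0 0 = 0 -> r 1 0 = 0 -> r 2 0 = gam -> gam != 0 ->
  [/\ B p q = q + (del / gam) *: r, B p r = r & B q r = 0].
Proof.
move=> p0 q0 q1 r0 r1 r2 g0.
split; apply/matrixP => i j; rewrite (ord1 j) !mxE;
case: (ord3 i) => [->|[->|->]] /=; rewrite ?p0 ?q0 ?q1 ?r0 ?r1 ?r2; field; by rewrite ?g0.
Qed.
End Tri.

Section Constr.
Variable R : realType.
Local Notation g := 'cV[R]_3.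
Variable ip : g -> g -> R.
Hypothesis Hip : is_inner_product ip.

Definition E (i : 'I_3) : g := \col_(l < 3) (l == i)%:R.
Local Notation E0 := (E 0). Local Notation E1 := (E 1). Local Notation E2 := (E 2).
Definition s_ := ip E2 E2.
Definition y1 := E1 - (ip E1 E2 / s_) *: E2.
Definition t_ := ip y1 y1.
Definition y0 := E0 - (ip E0 y1 / t_) *: y1 - (ip E0 E2 / s_) *: E2.
Definition N_ := ip y0 y0.
Definition del := Num.sqrt (N_ / t_).
Definition gam := Num.sqrt (N_ / s_).
Definition X (i : 'I_3) : g := if i == 0 then y0 else if i == 1 then del *: y1 else gam *: E2.

Lemma nz_of (v : g) (i : 'I_3) : v i 0 != 0 -> v != 0.
Proof. by apply: contraNneq => ->; rewrite mxE. Qed.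

Lemma y1_0 : y1 0 0 = 0. Proof. by rewrite !mxE /=; ring. Qed.
Lemma y1_1 : y1 1 0 = 1. Proof. by rewrite !mxE /=; ring. Qed.
Lemma y0_0 : y0 0 0 = 1. Proof. by rewrite !mxE /=; ring. Qed.

Lemma s_gt0 : 0 < s_.
Proof. case: Hip => _ [_ H]; apply: H; apply: (@nz_of _ 2); rewrite mxE /=; exact: oner_neq0. Qed.
Lemma t_gt0 : 0 < t_.
Proof. case: Hip => _ [_ H]; apply: H; apply: (@nz_of _ 1); rewrite y1_1; exact: oner_neq0. Qed.
Lemma N_gt0 : 0 < N_.
Proof. case: Hip => _ [_ H]; apply: H; apply: (@nz_of _ 0); rewrite y0_0; exact: oner_neq0. Qed.

Lemma s_neq0 : s_ != 0. Proof. by rewrite gt_eqF // s_gt0. Qed.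
Lemma t_neq0 : t_ != 0. Proof. by rewrite gt_eqF // t_gt0. Qed.
Lemma N_neq0 : N_ != 0. Proof. by rewrite gt_eqF // N_gt0. Qed.
Lemma o12 : ip y1 E2 = 0.
Proof. rewrite /y1 (ipB Hip) (ipZ Hip) -/s_; field; by rewrite ?s_neq0. Qed.
Lemma o01 : ip y0 y1 = 0.
Proof.
rewrite /y0 !(ipB Hip) !(ipZ Hip) (ipS Hip E2) o12 -/t_.
field; by rewrite ?s_neq0 ?t_neq0. Qed.
Lemma o02 : ip y0 E2 = 0.
Proof.
rewrite /y0 !(ipB Hip) !(ipZ Hip) o12 -/s_.
field; by rewrite ?s_neq0 ?t_neq0. Qed.
Lemma o10 : ip y1 y0 = 0. Proof. by rewrite (ipS Hip) o01. Qed.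
Lemma o20 : ip E2 y0 = 0. Proof. by rewrite (ipS Hip) o02. Qed.
Lemma o21 : ip E2 y1 = 0. Proof. by rewrite (ipS Hip) o12. Qed.

Lemma del_gt0 : 0 < del.
Proof. by rewrite sqrtr_gt0 divr_gt0 // ?N_gt0 ?t_gt0. Qed.
Lemma gam_gt0 : 0 < gam.
Proof. by rewrite sqrtr_gt0 divr_gt0 // ?N_gt0 ?s_gt0. Qed.
Lemma dd : del * del = N_ / t_.
Proof. by rewrite -expr2 sqr_sqrtr // ltW // divr_gt0 // ?N_gt0 ?t_gt0. Qed.
Lemma gg : gam * gam = N_ / s_.
Proof. by rewrite -expr2 sqr_sqrtr // ltW // divr_gt0 // ?N_gt0 ?s_gt0. Qed.

Lemma X_on (i j : 'I_3) : N_^-1 * ip (X i) (X j) = (i == j)%:R.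
Proof.
case: (ord3 i) => [->|[->|->]]; case: (ord3 j) => [->|[->|->]]; rewrite /X /=;
rewrite ?(ipZ Hip) ?(ipZr Hip) ?o01 ?o02 ?o12 ?o10 ?o20 ?o21 ?mulr0 //.
- by rewrite -/N_ mulVf // N_neq0.
- rewrite mulrA dd -/t_; field; by rewrite ?N_neq0 ?t_neq0.
- rewrite mulrA gg -/s_; field; by rewrite ?N_neq0 ?s_neq0.
Qed.

Lemma X_br : let lam := del / gam in
  [/\ r3_bracket (X 0) (X 1) = X 1 + lam *: X 2,
      r3_bracket (X 0) (X 2) = X 2 & r3_bracket (X 1) (X 2) = 0].
Proof.
apply: tri_br; rewrite /X /= ?mxE /= ?y0_0 ?y1_0 ?y1_1 ?mulr0 ?mulr1 //; try ring.
by rewrite gt_eqF // gam_gt0.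
Qed.

Lemma X_span (v : g) : exists d0 d1 d2 : R, v = d0 *: X 0 + d1 *: X 1 + d2 *: X 2.
Proof.
apply: tri_span; rewrite /X /= ?mxE /= ?y0_0 ?y1_0 ?y1_1 ?mulr0 ?mulr1 //; try ring.
- by rewrite subr0 mulr1 gt_eqF // del_gt0.
- by rewrite gt_eqF // gam_gt0.
Qed.
End Constr.

Theorem proposition4p6 (R : realType) (ip : 'cV[R]_3 -> 'cV[R]_3 -> R) :
  is_inner_product ip ->
  exists (lambda k : R) (x : 'I_3 -> 'cV[R]_3),
    0 < lambda /\ 0 < k /\
    (* {x_1,x_2,x_3} is orthonormal for k <.,.> *)
    (forall i j : 'I_3, k * ip (x i) (x j) = (i == j)%:R) /\
    (* bracket relations *)
    r3_bracket (x 0) (x 1) = x 1 + lambda *: x 2 /\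
    r3_bracket (x 0) (x 2) = x 2 /\
    r3_bracket (x 1) (x 2) = 0 /\
    (* the matrix expression of Der(g) w.r.t. {x_1,x_2,x_3} *)
    (forall M : 'M[R]_3,
       (exists D : 'cV[R]_3 -> 'cV[R]_3, is_derivation D /\ matrix_wrt x D M) <->
       (exists x21 x22 x31 x32 : R, M = der_form x21 x22 x31 x32)).
Proof.
move=> Hip.
have lam_gt0 : 0 < del ip / gam ip by rewrite divr_gt0 ?del_gt0 ?gam_gt0.
have k_gt0 : 0 < (N_ ip)^-1 by rewrite invr_gt0 N_gt0.
have [b1 b2 b3] := X_br Hip.
have Hon := X_on Hip.
exists (del ip / gam ip), (N_ ip)^-1, (X ip).
split; first exact: lam_gt0.
split; first exact: k_gt0.
split; first exact: Hon.
split; first exact: b1.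
split; first exact: b2.
split; first exact: b3.
move=> M; apply: (der_iff Hip lam_gt0 Hon b1 b2 b3).
exact: (span_of Hip Hon (X_span Hip)).
Qed.
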